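(* Every indecomposable continuum $X$ that is $d(X)$-Baire is coastal: for every $x\in X$ there exists $p\in X$ with $p\neq x$ such that $\kappa(x;p)$ is dense in $X$.
   Context: A continuum is a nondegenerate compact connected Hausdorff space; it is indecomposable if it is not the union of two proper subcontinua. $d(X)$ is the least cardinality of a dense subset of $X$; $X$ is $\alpha$-Baire if every family of $\alpha$ many open dense subsets has dense intersection. $\kappa(x;p)$ denotes the union of all subcontinua $M$ of $X$ with $x\in M$, $M\neq X$ and $p\notin M$. *)

(* Defs.v *)
From HB Require Import structures.
From mathcomp Require Import all_boot all_order all_algebra.
From mathcomp Require Import all_classical all_reals all_analysis.
Set Implicit Arguments. Unset Strict Implicit. Unset Printing Implicit Defensive.
Local Open Scope classical_set_scope.

Section ContinuumDefs.
Variable T : topologicalType.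

Definition is_continuum :=
  [/\ hausdorff_space T, compact [set: T], connected [set: T]
    & exists a b : T, a <> b].

Definition subcontinuum (M : set T) :=
  [/\ M !=set0, compact M & connected M].

Definition indecomposable :=
  ~ exists A B : set T, [/\ subcontinuum A, subcontinuum B, A <> setT,
                            B <> setT & A `|` B = setT].

(* D is a dense set of least cardinality, i.e. #|D| = d(X). *)
Definition density_witness (D : set T) :=
  dense D /\ forall D' : set T, dense D' -> (D #<= D')%card.

Definition density_Baire :=
  exists D : set T, density_witness D /\
    forall (I : Type) (J : set I) (F : I -> set T),
      (J #= D)%card ->
      (forall i, J i -> open (F i) /\ dense (F i)) ->
      dense (\bigcap_(i in J) F i).

Definition kappa (x p : T) : set T :=
  [set y | exists M : set T,
     [/\ subcontinuum M, M x, M <> setT, ~ M p & M y]].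

End ContinuumDefs.

(* Main.v *)
Require Import Defs.
From mathcomp Require Import all_boot all_order all_algebra.
From mathcomp Require Import all_classical all_reals all_analysis.
Local Open Scope classical_set_scope.

Section Helpers.
Context {T : topologicalType}.

Lemma conn_clopen (A : set T) : connected [set: T] -> open A -> closed A ->
  A !=set0 -> A = setT.
Proof.
move=> c oA cA A0; apply: c => //; [exists A => // | exists A => //];
  by rewrite setTI.
Qed.

Lemma fam_compact (Fm : set (set T)) (F0 G : set T) : compact [set: T] ->
  (forall F, Fm F -> closed F) ->
  (forall F1 F2, Fm F1 -> Fm F2 -> Fm (F1 `&` F2)) -> Fm F0 -> open G ->
  (forall z, (forall F, Fm F -> F z) -> G z) -> exists2 F, Fm F & F `<=` G.
Proof.
move=> cT clF IF F0F oG sub; apply: contrapT => nE.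
have ne : forall F, Fm F -> (F `&` ~` G) !=set0.
  move=> F FF; apply: contrapT => H; apply: nE; exists F => // z Fz.
  by apply: contrapT => nGz; apply: H; exists z.
pose Phi := filter_from Fm (fun F => F `&` ~` G).
have fPhi : Filter Phi.
  apply: filter_from_filter; first by exists F0.
  move=> i j Fi Fj; exists (i `&` j); first exact: IF.
  by move=> z [[iz jz] nG]; split; split.
have pPhi : ProperFilter Phi := filter_from_proper fPhi ne.
have [z [_ cz]] := cT Phi pPhi filterT.
have inF : forall F, Fm F -> (F `&` ~` G) z.
  move=> F FF.
  have cl : closed (F `&` ~` G) by apply: closedI; [exact: clF | exact: open_closedC].
  move: cl; rewrite closure_id => ->.
  move=> B nB; apply: cz => //; exists F => //.
exact: (inF F0 F0F).2 (sub z (fun F FF => (inF F FF).1)).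
Qed.

Lemma separate (A B : set T) : hausdorff_space T -> compact [set: T] ->
  closed A -> closed B -> A `&` B = set0 ->
  exists U W : set T, [/\ open U, open W, A `<=` U, B `<=` W & U `&` W = set0].
Proof.
move=> hT cT cA cB AB.
have nT := compact_normal hT cT.
have sn : set_nbhs A (~` B).
  apply/set_nbhsP; exists (~` B); split => //; first exact: closed_openC.
  by move=> z Az Bz; have : (A `&` B) z by []; rewrite AB.
have [V nV cVB] := nT A cA (~` B) sn.
have [U [oU AU UV]] := (set_nbhsP _ _).1 nV.
exists U, (~` closure V); split => //.
- exact/closed_openC/closed_closure.
- by move=> z Bz cz; exact: (cVB z cz).
- rewrite -subset0 => z [Uz nz]; apply: nz; apply: subset_closure; exact: UV.
Qed.

Lemma regular_nbhs (y : T) (O : set T) : hausdorff_space T -> compact [set: T] ->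
  open O -> O y -> exists N : set T, [/\ open N, N y & closure N `<=` O].
Proof.
move=> hT cT oO Oy.
have cy : closed [set y] by apply: compact_closed => //; exact: compact_set1.
have yO : [set y] `&` ~` O = set0 by rewrite -subset0 => z [-> ].
have [U [W [oU oW yU OW UW]]] := @separate _ _ hT cT cy (open_closedC oO) yO.
- exists U; split => //; first exact: yU.
  have : closure U `<=` ~` W.
    have cW : closed (~` W) by exact: open_closedC.
    move: cW; rewrite closure_id => ->; apply: closureS.
    by move=> z Uz Wz; have : (U `&` W) z by []; rewrite UW.
  move=> H z /H nWz; apply: contrapT => nOz; exact: nWz (OW z nOz).
Qed.


Definition qfam (K : set T) (x : T) : set (set T) :=
  [set F | [/\ closed F, exists2 O, open O & F = K `&` O & F x]].
Definition qcomp K x := \bigcap_(F in qfam K x) F.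

Lemma qfam_K K x : closed K -> K x -> qfam K x K.
Proof. by move=> cK Kx; split => //; exists setT; [exact: openT | rewrite setIT]. Qed.

Lemma qfam_I K x F1 F2 : qfam K x F1 -> qfam K x F2 -> qfam K x (F1 `&` F2).
Proof.
move=> [cl1 [V1 oV1 E1] x1] [cl2 [V2 oV2 E2] x2]; split => //.
- exact: closedI.
- exists (V1 `&` V2); first exact: openI.
  by rewrite E1 E2 setIACA setIid.
Qed.

Lemma qcomp_closed K x : closed (qcomp K x).
Proof. by apply: closed_bigI => F []. Qed.

Lemma qcomp_x K x : qcomp K x x.
Proof. by move=> F []. Qed.

Lemma qcomp_sub K x : closed K -> K x -> qcomp K x `<=` K.
Proof. by move=> cK Kx z Qz; apply: (Qz K); exact: qfam_K. Qed.

Lemma qcomp_sep (K : set T) x (P R : set T) : hausdorff_space T ->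
  compact [set: T] -> closed K -> K x -> closed P -> closed R ->
  P `&` R = set0 -> P `|` R = qcomp K x -> P x -> R = set0.
Proof.
move=> hT cT cK Kx cP cR PR PRQ Px.
have [U [W [oU oW PU RW UW]]] := @separate _ _ hT cT cP cR PR.
have [F [cF [V oV FE] Fx] FUW] := @fam_compact (qfam K x) K (U `|` W) cT
  (fun F h => let: And3 c _ _ := h in c) (@qfam_I K x) (@qfam_K K x cK Kx) (openU oU oW) 
  (fun z Hz => match (eq_ind _ (fun S => S z) (Hz : qcomp K x z) _ (esym PRQ)) with
               | or_introl h => or_introl (PU z h) | or_intror h => or_intror (RW z h) end).
have FU : qfam K x (F `&` U).
  split.
  - have -> : F `&` U = F `&` ~` W.
      apply/seteqP; split => z [Fz Hz]; split => //.
        by move=> Wz; have : (U `&` W) z by []; rewrite UW.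
      by case: (FUW z Fz).
    by apply: closedI => //; exact: open_closedC.
  - by exists (V `&` U); [exact: openI | rewrite FE setIA].
  - by split => //; exact: PU.
have QU : qcomp K x `<=` U by move=> z Qz; exact: (Qz _ FU).2.
rewrite -subset0 => z Rz.
have : (U `&` W) z by split; [apply: QU; rewrite -PRQ; right | exact: RW].
by rewrite UW.
Qed.

Lemma qcomp_connected K x : hausdorff_space T -> compact [set: T] ->
  closed K -> K x -> connected (qcomp K x).
Proof.
move=> hT cT cK Kx B B0 [C1 oC1 E1] [C2 cC2 E2].
have cQ := @qcomp_closed K x.
have Qx := @qcomp_x K x.
pose A' := qcomp K x `&` ~` C1.
have cB : closed B by rewrite E2; exact: closedI.
have cA' : closed A' by apply: closedI => //; exact: open_closedC.
have BA : B `&` A' = set0 by rewrite E1 -subset0 => z [[_ ?] [_ ?]].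
have BuA : B `|` A' = qcomp K x.
  apply/seteqP; split.
    by move=> z [Bz|[]//]; move: Bz; rewrite E1 => -[].
  move=> z Qz; case: (pselect (C1 z)) => h; [left; rewrite E1 | right] => //.
case: (pselect (B x)) => Bx.
  have A0 := @qcomp_sep K x B A' hT cT cK Kx cB cA' BA BuA Bx.
  by rewrite -BuA A0 setU0.
have A'x : A' x by split => // C1x; apply: Bx; rewrite E1.
have AB' : A' `&` B = set0 by rewrite setIC.
have AuB : A' `|` B = qcomp K x by rewrite setUC.
have B0' := @qcomp_sep K x A' B hT cT cK Kx cA' cB AB' AuB A'x.
by rewrite B0' in B0; case: B0.
Qed.


Lemma comp_dense (x : T) (V : set T) : hausdorff_space T -> compact [set: T] ->
  connected [set: T] -> (exists a b : T, a <> b) -> open V -> V !=set0 ->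
  exists M, [/\ subcontinuum M, M x, M <> setT & M `&` V !=set0].
Proof.
move=> hT cT conT [a [b ab]] oV [y Vy].
case: (pselect (V x)) => Vx.
  exists [set x]; split => //; last by exists x.
    by split; [exists x | exact: compact_set1 | exact: connected1].
  move=> zT; apply: ab; have : [set x] a by rewrite zT.
  have : [set x] b by rewrite zT.
  by move=> -> ->.
have yx : y <> x by move=> yx; apply: Vx; rewrite -yx.
pose O := V `&` ~` [set x].
have oO : open O.
  apply: openI => //; apply: closed_openC; apply: compact_closed => //.
  exact: compact_set1.
have Oy : O y by split.
have [N [oN Ny cNO]] := @regular_nbhs y O hT cT oO Oy.
pose K := ~` N.
have cK : closed K := open_closedC oN.
have Kx : K x.
  move=> Nx; have : closure N x by apply/subset_closure.
  by move/cNO => [_]; apply.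
exists (qcomp K x); split.
- split; [by exists x; exact: qcomp_x | | exact: qcomp_connected].
  by apply: (subclosed_compact (@qcomp_closed K x) cT).
- exact: qcomp_x.
- move=> QT; have : qcomp K x y by rewrite QT.
  by move/(@qcomp_sub K x cK Kx); apply.
- apply: contrapT => nQV.
  have QG : forall z, (forall F, qfam K x F -> F z) -> (~` closure N) z.
    move=> z Qz cz; apply: nQV; exists z; split => //; exact: (cNO z cz).1.
  have [F [cF [W oW FE] Fx] FG] := @fam_compact (qfam K x) K (~` closure N) cT
    (fun F h => let: And3 c _ _ := h in c) (@qfam_I K x) (@qfam_K K x cK Kx)
    (closed_openC (@closed_closure _ N)) QG.
  have FE' : F = W `&` ~` closure N.
    apply/seteqP; split.
      by move=> z Fz; split; [move: Fz; rewrite FE => -[] | exact: FG].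
    move=> z [Wz nc]; rewrite FE; split => //.
    by move=> Nz; apply: nc; apply/subset_closure.
  have oF : open F.
    by rewrite FE'; apply: openI => //; exact/closed_openC/closed_closure.
  have FT := @conn_clopen F conT oF cF (ex_intro _ x Fx).
  have : F y by rewrite FT.
  by rewrite FE => -[Ky _]; exact: Ky Ny.
Qed.

Lemma union_conn (M A : set T) : connected [set: T] -> connected M ->
  M !=set0 -> open A -> A `<=` ~` M -> closed (M `|` A) -> connected (M `|` A).
Proof.
move=> conT cM [m Mm] oA AM cMA E E0 [W oW EW] [C cC EC].
case: (pselect (E `&` M !=set0)) => EM.
- have ME : M `<=` E.
    have EMM : E `&` M = M.
      apply: cM => //.
      + exists W => //; rewrite EW; apply/seteqP; split => z.
          by move=> [[_ Wz] Mz]; split.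
        by move=> [Mz Wz]; split => //; split => //; left.
      + exists C => //; rewrite EC; apply/seteqP; split => z.
          by move=> [[_ Wz] Mz]; split.
        by move=> [Mz Wz]; split => //; split => //; left.
    by rewrite -EMM => z [].
  apply/seteqP; split; first by rewrite EW => z [].
  move=> z MAz; apply: contrapT => nEz.
  pose E' := (M `|` A) `&` ~` W.
  have E'z : E' z by split => // Wz; apply: nEz; rewrite EW.
  have E'e : E' = A `&` ~` C.
    apply/seteqP; split => u.
      move=> [MAu nWu].
      have nEu : ~ E u by move=> Eu; apply: nWu; move: Eu; rewrite EW => -[].
      split.
        by case: MAu => // Mu; exfalso; exact: nEu (ME u Mu).
      by move=> Cu; apply: nEu; rewrite EC; split.
    move=> [Au nCu]; split; first by right.
    move=> Wu; apply: nCu.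
    have : E u by rewrite EW; split => //; right.
    by rewrite EC => -[].
  have oE' : open E' by rewrite E'e; apply: openI => //; exact: closed_openC.
  have cE' : closed E' by apply: closedI => //; exact: open_closedC.
  have E'T := @conn_clopen E' conT oE' cE' (ex_intro _ z E'z).
  have : E' m by rewrite E'T.
  move=> [_ nWm]; apply: nWm; have := ME m Mm; by rewrite EW => -[].
- have EA : E `<=` A.
    move=> u Eu; have := Eu; rewrite {1}EW => -[[Mu|Au] _] //.
    by exfalso; apply: EM; exists u.
  have EAW : E = A `&` W.
    apply/seteqP; split.
      by move=> z Ez; split; [exact: EA | move: Ez; rewrite EW => -[]].
    by move=> z [Az Wz]; rewrite EW; split => //; right.
  have oE : open E by rewrite EAW; exact: openI.
  have cE : closed E by rewrite EC; exact: closedI.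
  have ET := @conn_clopen E conT oE cE E0.
  by exfalso; apply: EM; exists m; split => //; rewrite ET.
Qed.


Lemma proper_nowhere_dense (M : set T) : hausdorff_space T -> compact [set: T] ->
  connected [set: T] -> indecomposable T -> subcontinuum M -> M <> setT ->
  dense (~` M).
Proof.
move=> hT cT conT ind [[m Mm] cM conM] MT.
have clM : closed M := compact_closed hT cM.
have subc : forall S : set T, closed S -> S !=set0 -> connected S -> subcontinuum S.
  by move=> S cS S0 conS; split => //; apply: (subclosed_compact cS cT).
have nM0 : (~` M) !=set0.
  apply: contrapT => h; apply: MT; apply/seteqP; split => // z _.
  by apply: contrapT => nz; apply: h; exists z.
have conC : connected (~` M).
  move=> B B0 [C1 oC1 E1] [C2 cC2 E2]; apply: contrapT => BneM.
  pose B' := ~` M `&` ~` C2.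
  have oB : open B by rewrite E1; apply: openI => //; exact: closed_openC.
  have oB' : open B' by apply: openI; exact: closed_openC.
  have BM : B `<=` ~` M by rewrite E1 => z [].
  have B'M : B' `<=` ~` M by move=> z [].
  have e1 : M `|` B = ~` B'.
    apply/seteqP; split.
      move=> z [Mz|Bz] [nMz nC2z]; first exact: nMz Mz.
      by apply: nC2z; move: Bz; rewrite E2 => -[].
    move=> z nB'z; case: (pselect (M z)) => Mz; [by left|right].
    rewrite E2; split => //; apply: contrapT => nc; apply: nB'z; split.
      exact: Mz.
    exact: nc.
  have e2 : M `|` B' = ~` B.
    apply/seteqP; split.
      move=> z [Mz|[nMz nC2z]] Bz; first exact: BM Bz Mz.
      by apply: nC2z; move: Bz; rewrite E2 => -[].
    move=> z nBz; case: (pselect (M z)) => Mz; [by left|right].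
    split => // C2z; apply: nBz; rewrite E2; split.
      exact: Mz.
    exact: C2z.
  have cMB : closed (M `|` B) by rewrite e1; exact: open_closedC.
  have cMB' : closed (M `|` B') by rewrite e2; exact: open_closedC.
  have [b0 Bb0] := B0.
  have [b1 B'b1] : B' !=set0.
    apply: contrapT => h; apply: BneM; apply/seteqP; split => // z nMz.
    rewrite E2; split => //; apply: contrapT => nc; apply: h; exists z; split.
      exact: nMz.
    exact: nc.
  apply: ind; exists (M `|` B), (M `|` B'); split.
  - apply: subc => //; first by exists m; left.
    by apply: union_conn => //; exists m.
  - apply: subc => //; first by exists m; left.
    by apply: union_conn => //; exists m.
  - move=> h; have : (M `|` B) b1 by rewrite h.
    by rewrite e1; apply.
  - move=> h; have : (M `|` B') b0 by rewrite h.
    by rewrite e2; apply.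
  - apply/seteqP; split => // z _.
    case: (pselect (M z)) => Mz; first by left; left.
    case: (pselect (C2 z)) => C2z; [left; right; rewrite E2 | right; right] => //.
have ccl : subcontinuum (closure (~` M)).
  apply: subc; first exact: closed_closure.
    by have [z nz] := nM0; exists z; apply/subset_closure.
  exact: connected_closure.
have clT : closure (~` M) = setT.
  apply: contrapT => h; apply: ind; exists M, (closure (~` M)); split => //.
    by split => //; exists m.
  apply/seteqP; split => // z _; case: (pselect (M z)) => Mz; [by left | right].
  by apply/subset_closure.
move=> U [u Uu] oU.
have : closure (~` M) u by rewrite clT.
move=> /(_ U (open_nbhs_nbhs (conj oU Uu))) [w [nMw Uw]].
by exists w; split.
Qed.

End Helpers.

Theorem mainTheorem4 (T : topologicalType) :
  is_continuum T -> indecomposable T -> density_Baire T ->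
  forall x : T, exists p : T, p <> x /\ dense (kappa x p).
Proof.
move=> [hT cT conT [a [b ab]]] ind [D [[dD _] baire]] x.
case: (pselect (exists p, p <> x /\
   ~ exists M, [/\ subcontinuum M, M x, M <> setT & M p])).
  move=> [p [px nM]]; exists p; split => //.
  move=> V V0 oV.
  have [M [sM Mx MT [z [Mz Vz]]]] := @comp_dense T x V hT cT conT
    (ex_intro _ a (ex_intro _ b ab)) oV V0.
  exists z; split => //; exists M; split => // Mp.
  by apply: nM; exists M; split.
move=> nE.
have H : forall p, exists M, [/\ subcontinuum M, M x, M <> setT & M p].
  move=> p; case: (pselect (p = x)) => [->|px].
    exists [set x]; split => //.
      by split; [exists x | exact: compact_set1 | exact: connected1].
    move=> zT; apply: ab; have : [set x] a by rewrite zT.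
    have : [set x] b by rewrite zT.
    by move=> -> ->.
  by apply: contrapT => h; apply: nE; exists p; split.
have [Mf HM] := choice H.
have hyp : forall d, D d -> open (~` Mf d) /\ dense (~` Mf d).
  move=> d _; have [sM _ MT _] := HM d; split.
    by apply: closed_openC; apply: compact_closed => //; case: sM.
  exact: proper_nowhere_dense.
have dI := baire T D (fun d => ~` Mf d) (card_eqxx D) hyp.
have [p [_ Ip]] := dI setT (ex_intro _ a I) openT.
have [d0 [_ Dd0]] := dD setT (ex_intro _ a I) openT.
exists p; split.
  move=> px; apply: (Ip d0 Dd0); rewrite px.
  by have [] := HM d0.
move=> O O0 oO.
have [d [Od Dd]] := dD O O0 oO.
exists d; split => //; exists (Mf d).
have [sM Mx MT Md] := HM d; split => //.
exact: (Ip d Dd).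
Qed.
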